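(* For an ordered triple $(p,q,r)$ of integers the following are equivalent: (1) $r\ge\min(p-1,q)$, with equality holding unless $p=q$; (2) $q\ge\min(p,r)$, with equality holding unless $p=r+1$; (3) $p\ge\min(q,r+1)$, with equality holding unless $q=r$; (4) all three inequalities $p\ge\min(q,r+1)$, $q\ge\min(p,r)$, $r\ge\min(p-1,q)$ hold. *)

(* Defs.v *)
From Stdlib Require Export ZArith Lia.
Open Scope Z_scope.

Definition cond1 (p q r : Z) : Prop :=
  r >= Z.min (p - 1) q /\ (p <> q -> r = Z.min (p - 1) q).
Definition cond2 (p q r : Z) : Prop :=
  q >= Z.min p r /\ (p <> r + 1 -> q = Z.min p r).
Definition cond3 (p q r : Z) : Prop :=
  p >= Z.min q (r + 1) /\ (q <> r -> p = Z.min q (r + 1)).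
Definition cond4 (p q r : Z) : Prop :=
  p >= Z.min q (r + 1) /\ q >= Z.min p r /\ r >= Z.min (p - 1) q.

(* Main.v *)
Require Import Defs.
From Stdlib Require Import ZArith.
Open Scope Z_scope.

Theorem proposition5p4 (p q r : Z) :
  (cond1 p q r <-> cond4 p q r) /\
  (cond2 p q r <-> cond4 p q r) /\
  (cond3 p q r <-> cond4 p q r).
Proof.
  unfold cond1, cond2, cond3, cond4.
  destruct (Z.min_spec (p-1) q) as [[? H1]|[? H1]]; rewrite H1;
  destruct (Z.min_spec p r) as [[? H2]|[? H2]]; rewrite H2;
  destruct (Z.min_spec q (r+1)) as [[? H3]|[? H3]]; rewrite H3;
  repeat split; intros; try lia;
  repeat match goal with H : _ /\ _ |- _ => destruct H end;
  try lia;
  match goal with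
  | H : ?a <> ?b -> _ |- _ => destruct (Z.eq_dec a b); [lia | specialize (H ltac:(assumption)); lia]
  end.
Qed.
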